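(* Let $X$ be a nonempty set and $d$ a triangular symmetric on $X$ such that $(X,d)$ is 0-complete. Let $T:X\to X$ be $d$-asymptotic, i.e. $\lim_n d(T^nx,T^{n+1}x)=0$ for all $x\in X$. Let $G\in\{M_1,M_2,M_3\}$ and suppose $T$ is $(d,G;\varphi)$-contractive, i.e. $d(Tx,Ty)\le\varphi(G(x,y))$ for all $x,y\in X$, for some nearly right admissible normal function $\varphi:[0,\infty)\to[0,\infty)$. Then $T$ is a global Picard operator (modulo $d$).
   Context: A symmetric on $X$ is a map $d:X\times X\to[0,\infty)$ with $d(x,y)=d(y,x)$; it is triangular if $d(x,z)\le d(x,y)+d(y,z)$ for all $x,y,z$. A sequence $(x_n)$ $0d$-converges to $x$ if $d(x_n,x)\to0$; it is $0d$-convergent if such $x$ exists. It is $0d$-Cauchy if for every $\varepsilon>0$ there is $j$ with $d(x_m,x_n)<\varepsilon$ whenever $j\le m<n$. $(X,d)$ is 0-complete if every $0d$-Cauchy sequence is $0d$-convergent. A subset $Y\neq\emptyset$ is $d$-singleton if $d(y_1,y_2)=0$ for all $y_1,y_2\in Y$. A point $z$ is $d$-fixed if $d(z,Tz)=0$; $\mathrm{Fix}(T;d)$ is the set of such points. $x$ is a Picard point (modulo $(d,T)$) if $(T^nx)$ is $0d$-convergent and every point to which it $0d$-converges lies in $\mathrm{Fix}(T;d)$. $T$ is a Picard operator (modulo $d$) if every $x\in X$ is a Picard point, and a global Picard operator (modulo $d$) if moreover $\mathrm{Fix}(T;d)$ is $d$-singleton. Notation: $M_1(x,y)=d(x,y)$,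 $H(x,y)=\max\{d(x,Tx),d(y,Ty)\}$, $L(x,y)=\frac12[d(x,Ty)+d(Tx,y)]$, $M_2=\max\{M_1,H\}$, $M_3=\max\{M_1,H,L\}$. A function $\varphi:[0,\infty)\to[0,\infty)$ is normal if $\varphi(0)=0$ and $\varphi(t)<t$ for $t>0$. For $s>0$, $L_+\varphi(s)=\max\{\limsup_{t\to s+}\varphi(t),\varphi(s)\}$. A normal $\varphi$ is nearly right admissible if there is a countable $Q\subseteq(0,\infty)$ with $L_+\varphi(s)<s$ (equivalently $\limsup_{t\to s+}\varphi(t)<s$) for all $s\in(0,\infty)\setminus Q$. *)

(* Defs.v *)
From Stdlib Require Import Reals Lra.
Open Scope R_scope.

Section Defs.
Context {X : Type}.

Definition symmetric (d : X -> X -> R) : Prop :=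
  (forall x y, 0 <= d x y) /\ (forall x y, d x y = d y x).

Definition triangular (d : X -> X -> R) : Prop :=
  forall x y z, d x z <= d x y + d y z.

Definition zd_conv (d : X -> X -> R) (u : nat -> X) (x : X) : Prop :=
  Un_cv (fun n => d (u n) x) 0.

Definition zd_convergent (d : X -> X -> R) (u : nat -> X) : Prop :=
  exists x, zd_conv d u x.

Definition zd_cauchy (d : X -> X -> R) (u : nat -> X) : Prop :=
  forall eps, eps > 0 -> exists j : nat,
    forall m n : nat, (j <= m)%nat -> (m < n)%nat -> d (u m) (u n) < eps.

Definition zero_complete (d : X -> X -> R) : Prop :=
  forall u, zd_cauchy d u -> zd_convergent d u.

Definition d_singleton (d : X -> X -> R) (Y : X -> Prop) : Prop :=
  (exists y, Y y) /\ forall y1 y2, Y y1 -> Y y2 -> d y1 y2 = 0.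

Definition Fix (d : X -> X -> R) (T : X -> X) (z : X) : Prop := d z (T z) = 0.

Definition picard_point (d : X -> X -> R) (T : X -> X) (x : X) : Prop :=
  zd_convergent d (fun n => Nat.iter n T x) /\
  forall z, zd_conv d (fun n => Nat.iter n T x) z -> Fix d T z.

Definition picard_operator (d : X -> X -> R) (T : X -> X) : Prop :=
  forall x, picard_point d T x.

Definition global_picard_operator (d : X -> X -> R) (T : X -> X) : Prop :=
  picard_operator d T /\ d_singleton d (Fix d T).

Definition d_asymptotic (d : X -> X -> R) (T : X -> X) : Prop :=
  forall x, Un_cv (fun n => d (Nat.iter n T x) (Nat.iter (S n) T x)) 0.

Definition M1 (d : X -> X -> R) (T : X -> X) (x y : X) : R := d x y.
Definition Hf (d : X -> X -> R) (T : X -> X) (x y : X) : R :=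
  Rmax (d x (T x)) (d y (T y)).
Definition Lf (d : X -> X -> R) (T : X -> X) (x y : X) : R :=
  (d x (T y) + d (T x) y) / 2.
Definition M2 (d : X -> X -> R) (T : X -> X) (x y : X) : R :=
  Rmax (M1 d T x y) (Hf d T x y).
Definition M3 (d : X -> X -> R) (T : X -> X) (x y : X) : R :=
  Rmax (Rmax (M1 d T x y) (Hf d T x y)) (Lf d T x y).

Definition contractive (d : X -> X -> R) (T : X -> X)
  (G : X -> X -> R) (phi : R -> R) : Prop :=
  forall x y, d (T x) (T y) <= phi (G x y).
End Defs.

(* phi : [0,oo) -> [0,oo), represented as R -> R with the conditions on [0,oo) *)
Definition normal (phi : R -> R) : Prop :=
  (forall t, 0 <= t -> 0 <= phi t) /\ phi 0 = 0 /\
  (forall t, 0 < t -> phi t < t).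

(* L_+ phi(s) < s, i.e. max(limsup_{t->s+} phi t, phi s) < s, written out:
   phi s < s and there are r < s and delta > 0 with phi t <= r on (s, s+delta). *)
Definition Lplus_lt (phi : R -> R) (s : R) : Prop :=
  phi s < s /\
  exists r delta, r < s /\ delta > 0 /\
    forall t, s < t < s + delta -> phi t <= r.

Definition countable_set (Q : R -> Prop) : Prop :=
  exists f : R -> nat, forall a b, Q a -> Q b -> f a = f b -> a = b.

Definition nearly_right_admissible (phi : R -> R) : Prop :=
  normal phi /\
  exists Q : R -> Prop, (forall s, Q s -> 0 < s) /\ countable_set Q /\
    forall s, 0 < s -> ~ Q s -> Lplus_lt phi s.

(* Main.v *)
Require Import Defs.
From Stdlib Require Import Reals.
From Stdlib Require Import Lra Lia Classical ClassicalEpsilon.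
Open Scope R_scope.

Fixpoint nest (u : nat -> R) (a b : R) (n : nat) : R * R :=
  match n with
  | O => (a, b)
  | S k => let p := nest u a b k in
     if Rlt_dec (u k) ((fst p + snd p) / 2)
     then (snd p - (snd p - fst p) / 3, snd p)
     else (fst p, fst p + (snd p - fst p) / 3)
  end.

Lemma nest_lt u a b : a < b -> forall n, fst (nest u a b n) < snd (nest u a b n).
Proof. intros H n; induction n; simpl; auto. destruct Rlt_dec; simpl; lra. Qed.

Lemma nest_mono u a b : a < b -> forall n,
  fst (nest u a b n) <= fst (nest u a b (S n)) /\ snd (nest u a b (S n)) <= snd (nest u a b n).
Proof. intros H n; pose proof (nest_lt u a b H n); simpl; destruct Rlt_dec; simpl; lra. Qed.

Lemma nest_avoid u a b : a < b -> forall n y,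
  fst (nest u a b (S n)) <= y <= snd (nest u a b (S n)) -> y <> u n.
Proof.
  intros H n y Hy E; pose proof (nest_lt u a b H n); simpl in Hy;
  destruct Rlt_dec; simpl in Hy; rewrite E in Hy; lra.
Qed.

Lemma nest_mono2 u a b : a < b -> forall m k,
  fst (nest u a b m) <= fst (nest u a b (m + k)) /\ snd (nest u a b (m + k)) <= snd (nest u a b m).
Proof.
  intros H m k; induction k.
  - rewrite Nat.add_0_r; lra.
  - rewrite Nat.add_succ_r. pose proof (nest_mono u a b H (m + k)). lra.
Qed.

Lemma fst_le_snd u a b : a < b -> forall m n, fst (nest u a b m) <= snd (nest u a b n).
Proof.
  intros H m n. destruct (nest_mono2 u a b H m n) as [H1 _].
  destruct (nest_mono2 u a b H n m) as [_ H2]. rewrite Nat.add_comm in H2.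
  pose proof (nest_lt u a b H (m + n)). lra.
Qed.

Lemma avoid_seq (u : nat -> R) a b : a < b -> exists l, a <= l <= b /\ forall n, l <> u n.
Proof.
  intros H.
  set (E := fun x => exists n, x = fst (nest u a b n)).
  assert (HB : bound E).
  { exists b. intros x [n ->]. apply (fst_le_snd u a b H n 0). }
  assert (HE : exists x, E x) by (exists a; exists 0%nat; reflexivity).
  destruct (completeness E HB HE) as [l [Hl1 Hl2]].
  assert (Hge : forall n, fst (nest u a b n) <= l) by (intro n; apply Hl1; exists n; auto).
  assert (Hle : forall n, l <= snd (nest u a b n)).
  { intro n. apply Hl2. intros x [m ->]. apply fst_le_snd; auto. }
  exists l. split.
  - split; [apply (Hge 0%nat) | apply (Hle 0%nat)].
  - intro n. apply nest_avoid with a b; auto.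
Qed.

Lemma avoid_countable (Q : R -> Prop) a b : countable_set Q -> a < b ->
  exists l, a <= l <= b /\ ~ Q l.
Proof.
  intros [f Hf] Hab.
  set (u := fun n => epsilon (inhabits 0) (fun q => Q q /\ f q = n)).
  destruct (avoid_seq u a b Hab) as [l [Hl Hn]].
  exists l; split; auto. intro Ql.
  assert (Hs : Q (u (f l)) /\ f (u (f l)) = f l).
  { unfold u. apply (epsilon_spec (inhabits 0) (fun q => Q q /\ f q = f l)). eauto. }
  destruct Hs as [Hs1 Hs2]. apply (Hn (f l)). symmetry. apply Hf; auto.
Qed.

Lemma Un_cv_small (u : nat -> R) : Un_cv u 0 -> forall e, e > 0 ->
  exists N, forall n, (n >= N)%nat -> u n < e.
Proof.
  intros H e He; destruct (H e He) as [N HN]; exists N; intros n Hn.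
  specialize (HN n Hn); unfold R_dist in HN; rewrite Rminus_0_r in HN.
  apply Rle_lt_trans with (Rabs (u n)); [apply Rle_abs | exact HN].
Qed.

Lemma min_ex (P : nat -> Prop) n0 : P n0 -> exists n, P n /\ forall k, (k < n)%nat -> ~ P k.
Proof.
  induction n0 as [n0 IH] using (well_founded_induction Wf_nat.lt_wf). intros H.
  destruct (classic (exists k, (k < n0)%nat /\ P k)) as [[k [Hk Pk]]|Hn].
  - apply (IH k Hk Pk).
  - exists n0; split; auto. intros k Hk Pk; apply Hn; eauto.
Qed.

Lemma phi_le (phi : R -> R) : normal phi -> forall t, 0 <= t -> phi t <= t.
Proof.
  intros [_ [H0 H1]] t Ht. destruct (Rle_lt_or_eq_dec _ _ Ht) as [H|H].
  - left; auto.
  - subst; rewrite H0; lra.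
Qed.

Lemma uniq_fix (X : Type) (d : X -> X -> R) (T : X -> X) (G : X -> X -> R) (phi : R -> R) :
  symmetric d -> triangular d ->
  (G = M1 d T \/ G = M2 d T \/ G = M3 d T) -> normal phi ->
  contractive d T G phi -> forall y1 y2, Fix d T y1 -> Fix d T y2 -> d y1 y2 = 0.
Proof.
  intros [Hnn Hsym] Ht HG Hphi Hc y1 y2 F1 F2. unfold Fix in *.
  pose proof (Hnn y1 y2) as Ha.
  destruct (Rle_lt_or_eq_dec _ _ Ha) as [Hp|]; [|auto]. exfalso.
  assert (HGa : G y1 y2 = d y1 y2).
  { pose proof (Ht y1 y2 (T y2)). pose proof (Ht (T y1) y1 y2).
    rewrite (Hsym (T y1) y1) in H0.
    assert (E2 : M2 d T y1 y2 = d y1 y2).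
    { unfold M2, M1, Hf. rewrite F1, F2, (Rmax_left 0 0) by lra. apply Rmax_left; lra. }
    destruct HG as [->|[->| ->]]; auto.
    unfold M3. fold (M2 d T y1 y2). rewrite E2. apply Rmax_left. unfold Lf. lra. }
  pose proof (Hc y1 y2) as Hc1. rewrite HGa in Hc1.
  destruct Hphi as [_ [_ Hlt]]. pose proof (Hlt _ Hp).
  pose proof (Ht y1 (T y1) y2). pose proof (Ht (T y1) (T y2) y2).
  rewrite (Hsym (T y2) y2), F2 in H1. lra.
Qed.

Lemma conv_fix (X : Type) (d : X -> X -> R) (T : X -> X) (G : X -> X -> R) (phi : R -> R) :
  symmetric d -> triangular d -> d_asymptotic d T ->
  (G = M1 d T \/ G = M2 d T \/ G = M3 d T) -> normal phi ->
  contractive d T G phi -> forall x z, zd_conv d (fun n => Nat.iter n T x) z -> Fix d T z.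
Proof.
  intros [Hnn Hsym] Ht Has HG Hphi Hc x z Hz. unfold Fix.
  pose proof (Hnn z (T z)) as Ha.
  destruct (Rle_lt_or_eq_dec _ _ Ha) as [Hp|]; [|auto]. exfalso.
  set (a := d z (T z)) in *.
  pose proof Hphi as [_ [_ Hlt]]. pose proof (Hlt _ Hp) as Hpa.
  set (k := Rmin (a/4) ((a - phi a)/2)).
  assert (Hk : k > 0) by (unfold k; apply Rmin_glb_lt; lra).
  assert (Hk1 : k <= a/4) by apply Rmin_l.
  assert (Hk2 : k <= (a - phi a)/2) by apply Rmin_r.
  destruct (Un_cv_small _ Hz k Hk) as [N1 HN1].
  destruct (Un_cv_small _ (Has x) k Hk) as [N2 HN2].
  set (n := Nat.max N1 N2).
  pose proof (HN1 n ltac:(lia)) as A1. pose proof (HN1 (S n) ltac:(lia)) as A2.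
  pose proof (HN2 n ltac:(lia)) as A3. simpl in A2, A3.
  set (xn := Nat.iter n T x) in *.
  pose proof (Ht z (T xn) (T z)) as T1. rewrite (Hsym z (T xn)) in T1. fold a in T1.
  pose proof (Hc xn z) as C.
  destruct HG as [->|[->| ->]].
  - unfold M1 in C. pose proof (phi_le phi Hphi (d xn z) (Hnn _ _)). lra.
  - assert (E : M2 d T xn z = a).
    { unfold M2, M1, Hf. fold a. rewrite (Rmax_right (d xn (T xn)) a) by lra. apply Rmax_right; lra. }
    rewrite E in C. lra.
  - assert (E : M2 d T xn z = a).
    { unfold M2, M1, Hf. fold a. rewrite (Rmax_right (d xn (T xn)) a) by lra. apply Rmax_right; lra. }
    assert (E3 : M3 d T xn z = a).
    { unfold M3. fold (M2 d T xn z). rewrite E. apply Rmax_left. unfold Lf.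
      pose proof (Ht xn z (T z)). fold a in H. lra. }
    rewrite E3 in C. lra.
Qed.

Lemma cauchy_part (X : Type) (d : X -> X -> R) (T : X -> X) (G : X -> X -> R) (phi : R -> R) :
  symmetric d -> triangular d -> d_asymptotic d T ->
  (G = M1 d T \/ G = M2 d T \/ G = M3 d T) -> nearly_right_admissible phi ->
  contractive d T G phi -> forall x, zd_cauchy d (fun n => Nat.iter n T x).
Proof.
  intros [Hnn Hsym] Ht Has HG Hphi Hc x eps Heps.
  apply NNPP; intro Hno.
  assert (Hbig : forall j, exists m n, (j <= m)%nat /\ (m < n)%nat /\
             eps <= d (Nat.iter m T x) (Nat.iter n T x)).
  { intro j. apply NNPP; intro H1; apply Hno; exists j; intros m n Hm Hmn.
    apply Rnot_le_lt; intro H2; apply H1; eauto. }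
  destruct Hphi as [Hnorm [Q [HQpos [HQc HQ]]]].
  destruct (avoid_countable Q (eps/3) (2*eps/3) HQc ltac:(lra)) as [e [He HQe]].
  destruct (HQ e ltac:(lra) HQe) as [Hpe [r [dl [Hr [Hdl Hrt]]]]].
  set (r' := Rmax r (phi e)).
  assert (Hr' : r' < e) by (unfold r'; apply Rmax_lub_lt; lra).
  assert (Hpb : forall t, e <= t < e + dl -> phi t <= r').
  { intros t Htt. destruct (Rle_lt_or_eq_dec _ _ (proj1 Htt)) as [H|H].
    - apply Rle_trans with r; [apply Hrt; lra | apply Rmax_l].
    - subst t; apply Rmax_r. }
  set (eta := Rmin (Rmin (e/2) (dl/4)) ((e - r')/4)).
  assert (Ee1 : eta <= e/2) by (apply Rle_trans with (Rmin (e/2) (dl/4)); apply Rmin_l).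
  assert (Ee2 : eta <= dl/4) by (apply Rle_trans with (Rmin (e/2) (dl/4)); [apply Rmin_l|apply Rmin_r]).
  assert (Ee3 : eta <= (e - r')/4) by apply Rmin_r.
  assert (Hep : eta > 0) by (unfold eta; repeat apply Rmin_glb_lt; lra).
  destruct (Un_cv_small _ (Has x) eta Hep) as [N HN].
  destruct (Hbig N) as [m [n0 [HNm [Hmn Hd]]]].
  destruct (min_ex (fun k => (m < k)%nat /\ e <= d (Nat.iter m T x) (Nat.iter k T x)) n0)
    as [n [[Hmn1 Hn1] Hmin]].
  { split; auto; lra. }
  destruct n as [|n']; [lia|].
  assert (Hn' : (m < n')%nat).
  { destruct (Nat.eq_dec n' m) as [E|E]; [|lia]. subst n'.
    pose proof (HN m ltac:(lia)). simpl in *. lra. }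
  assert (Hd' : d (Nat.iter m T x) (Nat.iter n' T x) < e).
  { apply Rnot_le_lt; intro H; apply (Hmin n'); auto. }
  pose proof (HN m ltac:(lia)) as Cm. pose proof (HN n' ltac:(lia)) as Cn'.
  pose proof (HN (S n') ltac:(lia)) as Cn. simpl in Cm, Cn, Cn', Hn1.
  set (xm := Nat.iter m T x) in *. set (xn' := Nat.iter n' T x) in *.
  set (xn := T xn') in *.
  pose proof (Ht xm xn' xn) as T1.
  set (s := d xm xn) in *. clearbody xm xn' xn. assert (Es : s = d xm xn) by reflexivity. clearbody s.
  assert (HGb : e <= G xm xn < e + 2 * eta).
  { pose proof (Ht xm xn (T xn)) as L1. pose proof (Ht (T xm) xm xn) as L2.
    rewrite (Hsym (T xm) xm) in L2.
    assert (E2 : M2 d T xm xn = d xm xn).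
    { unfold M2, M1, Hf. apply Rmax_left. apply Rmax_lub; lra. }
    destruct HG as [->|[->| ->]].
    - unfold M1; lra.
    - rewrite E2; lra.
    - unfold M3. fold (M2 d T xm xn). rewrite E2. split.
      + apply Rle_trans with (d xm xn); [lra | apply Rmax_l].
      + apply Rmax_lub_lt; [lra|]. unfold Lf. lra. }
  pose proof (Hpb (G xm xn) ltac:(lra)) as P1.
  pose proof (Hc xm xn) as C.
  pose proof (Ht xm (T xm) xn) as T2. pose proof (Ht (T xm) (T xn) xn) as T3.
  rewrite (Hsym (T xn) xn) in T3.
  lra.
Qed.

Theorem theorem1 (X : Type) (x0 : X) (d : X -> X -> R) (T : X -> X)
  (G : X -> X -> R) (phi : R -> R) :
  symmetric d -> triangular d -> zero_complete d ->
  d_asymptotic d T ->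
  (G = M1 d T \/ G = M2 d T \/ G = M3 d T) ->
  nearly_right_admissible phi ->
  contractive d T G phi ->
  global_picard_operator d T.
Proof.
  intros Hs Ht Hcomp Has HG Hphi Hc.
  pose proof (proj1 Hphi) as Hn.
  assert (Hpic : picard_operator d T).
  { intro x. split.
    - apply Hcomp. eapply cauchy_part; eauto.
    - intros z Hz. eapply conv_fix; eauto. }
  split; auto. split.
  - destruct (proj1 (Hpic x0)) as [z Hz]. exists z. exact (proj2 (Hpic x0) z Hz).
  - intros y1 y2 F1 F2. eapply uniq_fix; eauto.
Qed.
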